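(* SW-PAV can fail to produce a committee satisfying IW-JR: there exists an approval-based SCV instance in which a committee maximizing the SW-PAV score does not satisfy IW-JR.
   Context: An approval-based sub-committee voting (SCV) instance consists of a set of voters $N=\{1,\ldots,n\}$, a finite set of candidates $C$ partitioned into candidate subsets $C_1,\ldots,C_\ell$, positive integer quotas $k_j\le |C_j|$, and approval ballots $A_i\subseteq C$ for $i\in N$. A committee is a set $W\subseteq C$ with $|W\cap C_j|=k_j$ for every $j$. Let $r(0)=0$ and $r(t)=\sum_{p=1}^t 1/p$ for $t\ge1$. The SW-PAV score of $W$ is $\sum_{i\in N} r(|W\cap A_i|)$. $W$ satisfies Intra-wise JR (IW-JR) if for every $X\subseteq N$ and every $j$, whenever $|X|\ge n/k_j$ and $|(\bigcap_{i\in X}A_i)\cap C_j|\ge 1$, we have $|W\cap C_j\cap \bigcup_{i\in X}A_i|\ge 1$. *)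

(* Defs.v *)
From mathcomp Require Import all_boot all_order all_algebra.
Set Implicit Arguments. Unset Strict Implicit. Unset Printing Implicit Defensive.
Import Order.TTheory GRing.Theory Num.Theory.

(* An approval-based SCV instance: voters 'I_n, candidates 'I_m,
   candidate subsets C_j (j : 'I_l) given by the partition map [part],
   quotas [k], and ballots [A]. *)

Section SCV.
Variables (n m l : nat) (part : 'I_m -> 'I_l) (k : 'I_l -> nat)
  (A : 'I_n -> {set 'I_m}).

Definition subC (j : 'I_l) : {set 'I_m} := [set c | part c == j].

Definition valid_quotas : Prop :=
  forall j : 'I_l, (0 < k j)%N /\ (k j <= #|subC j|)%N.

Definition is_committee (W : {set 'I_m}) : Prop :=
  forall j : 'I_l, #|W :&: subC j| = k j.

Definition harm (t : nat) : rat := \sum_(p < t) ((p.+1)%:R)^-1.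

Definition swpav_score (W : {set 'I_m}) : rat :=
  \sum_(i : 'I_n) harm #|W :&: A i|.

Definition IW_JR (W : {set 'I_m}) : Prop :=
  forall (X : {set 'I_n}) (j : 'I_l),
    (n%:R / (k j)%:R <= (#|X|%:R : rat))%R ->
    (1 <= #|[set c | [forall i in X, c \in A i]] :&: subC j|)%N ->
    (1 <= #|W :&: subC j :&: \bigcup_(i in X) A i|)%N.
End SCV.

(* Main.v *)
Require Import Defs.
From mathcomp Require Import all_boot all_order all_algebra.
Import Order.TTheory GRing.Theory Num.Theory.
Definition pt (c : 'I_5) : 'I_2 := if (c < 3)%N then ord0 else ord_max.
Definition AA (i : 'I_2) : {set 'I_5} :=
  if i == ord0 then [set c : 'I_5 | (c == 0%N :> nat) || (3 <= c)%N]
  else [set c : 'I_5 | (c == 1%N :> nat) || (c == 2%N :> nat)].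
Definition WW : {set 'I_5} := [set c : 'I_5 | c != 0%N :> nat].
Lemma card5 (S : {set 'I_5}) : #|S| =
  ((@Ordinal 5 0 isT) \in S) + ((@Ordinal 5 1 isT) \in S) + ((@Ordinal 5 2 isT) \in S)
  + ((@Ordinal 5 3 isT) \in S) + ((@Ordinal 5 4 isT) \in S).
Proof.
have H : forall x y : 'I_5, val x = val y -> (if x \in S then 1 else 0) = (y \in S).
  by move=> x y /val_inj ->; case: (_ \in S).
rewrite -sum1_card big_mkcond /= !big_ord_recl big_ord0 /= addn0 !addnA.
by congr (_ + _ + _ + _ + _); apply: H.
Qed.

Lemma h1 : (harm 3 + harm 1 <= harm 2 + harm 2 :> rat)%R.
Proof. rewrite /harm !big_ord_recr !big_ord0 /=. vm_compute. reflexivity. Qed.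
Lemma t2 : #|WW :&: subC pt ord0| = 2.
Proof. rewrite card5 !inE /=. done. Qed.
Lemma sc2 (W : {set 'I_5}) : swpav_score AA W = (harm #|W :&: AA ord0| + harm #|W :&: AA ord_max|)%R.
Proof. by rewrite /swpav_score big_ord_recr big_ord1. Qed.
Lemma opt (W' : {set 'I_5}) : is_committee pt (fun _ => 2) W' -> (swpav_score AA W' <= swpav_score AA WW)%R.
Proof.
move=> HW; move: (HW ord0) (HW ord_max); rewrite !sc2 !card5 !inE /=.
case: (@Ordinal 5 0 isT \in W'); case: (@Ordinal 5 1 isT \in W'); case: (@Ordinal 5 2 isT \in W');
case: (@Ordinal 5 3 isT \in W'); case: (@Ordinal 5 4 isT \in W') => //= _ _.
all: try exact: h1.
all: rewrite addrC; try exact: h1.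
all: exact: lexx.
Qed.

Lemma notjr : ~ IW_JR pt (fun _ => 2) AA WW.
Proof.
move=> H; have := H [set ord0] ord0.
have hf : [forall i in [set (ord0 : 'I_2)], (@Ordinal 5 0 isT) \in AA i].
  by apply/forall_inP => i; rewrite inE => /eqP ->; rewrite inE.
rewrite cards1 !card5 !inE big_set1 hf /= => /(_ (lexx _)).
rewrite !inE /=.
move=> HH; have : (0 < 0 + 0 + 0 + 0 + 0)%N by apply: HH; rewrite -!addnA.
by [].
Qed.

Theorem mainTheorem12 :
  exists (n m l : nat) (part : 'I_m -> 'I_l) (k : 'I_l -> nat)
         (A : 'I_n -> {set 'I_m}) (W : {set 'I_m}),
    [/\ (0 < n)%N,
        valid_quotas part k,
        is_committee part k W,
        (forall W' : {set 'I_m}, is_committee part k W' ->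
            (swpav_score A W' <= swpav_score A W)%R)
      & ~ IW_JR part k A W].
Proof.
exists 2, 5, 2, pt, (fun _ => 2), AA, WW; split => //.
- move=> j; split => //; rewrite /subC card5 !inE /pt /=.
  by case: j => [[|[|]]] //= ?; apply/eqP/val_inj.
- move=> j; rewrite /subC card5 !inE /pt /=.
  by case: j => [[|[|]]] //= ?; rewrite !(_ : Ordinal _ = Ordinal _) /=; apply/val_inj.
- exact: opt.
- exact: notjr.
Qed.
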